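(* Let $a,b,c$ be independent Uniform$[0,1]$ random variables and, writing $x \bmod 1 := x-\lfloor x\rfloor$, define $u=(a+b+c)\bmod 1$, $v=(a/2+b/2+c)\bmod 1$, $w=(4a/3+2b/3+c)\bmod 1$, $z=(2a/3+b/3+c)\bmod 1$. Let $Y=(a,b)$ and $X=(u,v,w,z)$. Then each of $u$, $v$, $w$, $z$ is (individually) independent of $Y$, whereas $Y$ is almost surely equal to a measurable function of $X$. *)

(* Defs.v *)
From HB Require Import structures.
From mathcomp Require Import all_boot all_order all_algebra.
From mathcomp Require Import all_classical all_reals all_analysis.
Set Implicit Arguments. Unset Strict Implicit. Unset Printing Implicit Defensive.
Import Order.TTheory GRing.Theory Num.Theory.
Local Open Scope classical_set_scope.
Local Open Scope ring_scope.

Definition mod1 {R : realType} (x : R) : R := x - (Num.floor x)%:~R.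

Definition uniform01 {d} {T : measurableType d} {R : realType}
  (P : probability T R) (X : T -> R) : Prop :=
  forall A : set R, measurable A ->
    P (X @^-1` A) = (@lebesgue_measure R) (A `&` `[0%R, 1%R]).

Definition indep3 {d} {T : measurableType d} {R : realType}
  (P : probability T R) (X1 X2 X3 : T -> R) : Prop :=
  forall A1 A2 A3 : set R, measurable A1 -> measurable A2 -> measurable A3 ->
    P (X1 @^-1` A1 `&` X2 @^-1` A2 `&` X3 @^-1` A3)
    = (P (X1 @^-1` A1) * P (X2 @^-1` A2) * P (X3 @^-1` A3))%E.

Definition indep2 {d d1 d2} {T : measurableType d} {R : realType}
  {T1 : measurableType d1} {T2 : measurableType d2}
  (P : probability T R) (X : T -> T1) (Y : T -> T2) : Prop :=
  forall (A : set T1) (B : set T2), measurable A -> measurable B ->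
    P (X @^-1` A `&` Y @^-1` B) = (P (X @^-1` A) * P (Y @^-1` B))%E.

(* Main.v *)
Require Import Defs.
From HB Require Import structures.
From mathcomp Require Import all_boot all_order all_algebra.
From mathcomp Require Import all_classical all_reals all_analysis.
From mathcomp Require Import ring lra measurable_realfun.
Import Order.TTheory GRing.Theory Num.Theory.
Local Open Scope classical_set_scope.
Local Open Scope ring_scope.

Section Mod1.
Context {R : realType}.
Implicit Types x y : R.

Lemma mod1_ge0 x : 0 <= mod1 x.
Proof. by rewrite /mod1 subr_ge0 Num.Theory.floor_le. Qed.

Lemma mod1_lt1 x : mod1 x < 1.
Proof.
rewrite /mod1 ltrBlDl; have := Num.Theory.floorD1_gt x.
by rewrite intrD.
Qed.

Lemma mod1_id x : 0 <= x < 1 -> mod1 x = x.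
Proof.
move=> hx; by rewrite /mod1 (@Num.Theory.floor_def _ x 0) ?subr0// add0r.
Qed.

Lemma mod1_sub1 x : 1 <= x < 2 -> mod1 x = x - 1.
Proof.
move=> hx; rewrite /mod1 (@Num.Theory.floor_def _ x 1) //.
Qed.

Lemma mod1DZ x (n : int) : mod1 (x + n%:~R) = mod1 x.
Proof.
rewrite /mod1 Num.Theory.floorDrz ?intr_int// Num.Theory.intrKfloor intrD.
by rewrite opprD addrACA subrr addr0.
Qed.

Lemma measurable_mod1 : measurable_fun setT (@mod1 R).
Proof.
apply: measurable_funB => //.
apply: nondecreasing_measurable => // x y xy.
by rewrite ler_int Num.Theory.le_floor.
Qed.

End Mod1.

Lemma mod1B {R : realType} (x y : R) : mod1 (mod1 x - mod1 y) = mod1 (x - y).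
Proof.
have -> : mod1 x - mod1 y = (x - y) + (Num.floor y - Num.floor x)%:~R.
  by rewrite /mod1 intrB; ring.
exact: mod1DZ.
Qed.


Set Implicit Arguments. Unset Strict Implicit. Unset Printing Implicit Defensive.

Definition pfw d d' (T : measurableType d) (T' : measurableType d') (R : realType)
  (m : {measure set T -> \bar R}) (f : T -> T') (mf : measurable_fun setT f) :=
  fun A => m (f @^-1` A).

Section pfw_measure.
Local Open Scope ereal_scope.
Context d d' (T : measurableType d) (T' : measurableType d') (R : realType).
Variables (m : {measure set T -> \bar R}) (f : T -> T') (mf : measurable_fun setT f).

Let pfw0 : pfw m mf set0 = 0.
Proof. by rewrite /pfw preimage_set0 measure0. Qed.

Let pfw_ge0 A : 0 <= pfw m mf A.
Proof. exact: measure_ge0. Qed.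

Let pfw_sigma_additive : semi_sigma_additive (pfw m mf).
Proof.
move=> F mF tF mUF; rewrite /pfw preimage_bigcup.
apply: measure_semi_sigma_additive.
- by move=> n; rewrite -[X in measurable X]setTI; exact: mf.
- apply/trivIsetP => /= i j _ _ ij; rewrite -preimage_setI.
  by move/trivIsetP : tF => /(_ _ _ _ _ ij) ->//; rewrite preimage_set0.
- by rewrite -preimage_bigcup -[X in measurable X]setTI; exact: mf.
Qed.

HB.instance Definition _ := isMeasure.Build _ _ _
  (pfw m mf) pfw0 pfw_ge0 pfw_sigma_additive.
End pfw_measure.

Lemma lebesgue_shift {R : realType} (r : R) (A : set R) : measurable A ->
  (@lebesgue_measure R) ((fun x => x + r) @^-1` A) = lebesgue_measure A.
Proof.
move=> mA.
have msh : measurable_fun (setT : set (measurableTypeR R)) (fun x : measurableTypeR R => (x + r : measurableTypeR R)).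
  by apply: measurable_funD.
have := @lebesgue_measure_unique R (pfw (T':=measurableTypeR R) lebesgue_measure msh).
move=> /(_ _ A mA) ->// X /ocitvP[->|[x x12 ->]].
  by rewrite !measure0.
rewrite /pfw /=.
have -> : (fun y => y + r) @^-1` `]x.1, x.2] = `]x.1 - r, x.2 - r]%classic.
  by apply/seteqP; split => y /=; rewrite !in_itv /= ?ltrBlDr ?lerBrDr.


rewrite !lebesgue_measure_itv /= !lte_fin ltrD2r x12.
by rewrite -!EFinB; congr (_%:E); rewrite opprB addrA subrK.
Qed.

Section Circle.
Context {R : realType}.
Local Notation L := (@lebesgue_measure R).

Lemma L_cc_co (X : set R) : measurable X ->
  L (X `&` `[0, 1]) = L (X `&` `[0, 1[).
Proof.
move=> mX.
have -> : X `&` `[0, 1] = (X `&` `[0, 1[) `|` (X `&` [set 1]).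
  apply/seteqP; split => x /=.
    move=> [Xx]; rewrite in_itv /= => /andP[x0 x1].
    have [x1e|x1'] := eqVneq x 1; first by right.
    by left; split=> //; rewrite in_itv /= x0 lt_neqAle x1' x1.
  case=> -[Xx]; first by rewrite !in_itv /= => /andP[h1 h2]; split=> //; apply/andP; split; lra.
  by move=> x1; subst x; split=> //; rewrite in_itv /= ler01 lexx.
rewrite measureU0 //; [exact: measurableI|exact: measurableI|].
apply: (@subset_measure0 _ _ _ L _ [set (1:R)]).
- exact: measurableI.
- by [].
- by move=> ? [].
- exact: lebesgue_measure_set1.
Qed.

Lemma circle (s : R) (A : set R) : measurable A ->
  L ([set z | A (mod1 (s + z))] `&` `[0, 1]) = L (A `&` `[0, 1]).
Proof.
move=> mA.
have r0 := mod1_ge0 s; have r1 := mod1_lt1 s.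
set r := mod1 s in r0 r1 *.
have sE z : mod1 (s + z) = mod1 (r + z).
  by rewrite -(mod1DZ (r + z) (Num.floor s)); congr (mod1 _); rewrite /r /mod1; ring.
have mpre : measurable [set z | A (mod1 (r + z))].
  have mf : measurable_fun setT (fun z : R => mod1 (r + z)).
    apply: measurableT_comp; first exact: measurable_mod1.
    by apply: measurable_funD.
  by rewrite -[X in measurable X]setTI; apply: mf.
have -> : [set z | A (mod1 (s + z))] = [set z | A (mod1 (r + z))].
  by apply/seteqP; split => z /=; rewrite sE.
rewrite L_cc_co // L_cc_co //.
have -> : [set z | A (mod1 (r + z))] `&` `[0, 1[ =
   ((fun z => z + r) @^-1` (A `&` `[r, 1[)) `|`
   ((fun z => z + (r - 1)) @^-1` (A `&` `[0, r[)).
  apply/seteqP; split => z /=.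
    rewrite in_itv /= => -[Az /andP[z0 z1]].
    have [hz|hz] := ltP (r + z) 1.
      left; rewrite mod1_id in Az; last by rewrite hz andbT addr_ge0.
      by rewrite addrC; split => //; rewrite in_itv /= hz andbT lerDl.
    right; rewrite mod1_sub1 in Az; last by rewrite hz /=; lra.
    have -> : z + (r - 1) = r + z - 1 by ring.
    by split => //; rewrite in_itv /=; apply/andP; split; lra.
  rewrite !in_itv /=.
  case=> -[Az /andP[h1 h2]].
    rewrite mod1_id; last by apply/andP; split; lra.
    by rewrite addrC; split => //; apply/andP; split; lra.
  rewrite mod1_sub1; last by apply/andP; split; lra.
  have -> : r + z - 1 = z + (r - 1) by ring.
  by split => //; apply/andP; split; lra.
have mI1 : measurable (A `&` `[r, 1[) by exact: measurableI.
have mI2 : measurable (A `&` `[0, r[) by exact: measurableI.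
have msh (q : R) : measurable_fun setT (fun z : R => z + q).
  by apply: measurable_funD.
have mp (q : R) (B : set R) : measurable B -> measurable ((fun z => z + q) @^-1` B).
  by move=> mB; rewrite -[X in measurable X]setTI; apply: msh.
rewrite measureU //; [|exact: mp|exact: mp|]; last first.
  apply/seteqP; split => z //= [[_]]; rewrite !in_itv /= => /andP[h1 h2] [_].
  by move=> /andP[h3 h4]; lra.
transitivity (adde (L (A `&` `[r, 1[)) (L (A `&` `[0, r[))).
  by congr adde; [exact: (lebesgue_shift r mI1)|exact: (lebesgue_shift (r - 1) mI2)].
have -> : A `&` `[0, 1[ = (A `&` `[r, 1[) `|` (A `&` `[0, r[).
  apply/seteqP; split => z /=.
    rewrite in_itv /= => -[Az /andP[z0 z1]].
    have [hz|hz] := ltP z r; [right|left]; split => //; rewrite in_itv /=;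
      apply/andP; split; lra.
  by case=> -[Az]; rewrite !in_itv /= => /andP[h1 h2]; split => //;
    apply/andP; split; lra.
rewrite measureU //.
apply/seteqP; split => z //= [[_]]; rewrite !in_itv /= => /andP[h1 h2] [_].
by move=> /andP[h3 h4]; lra.
Qed.

End Circle.

Definition lawr d d' (T : measurableType d) (T' : measurableType d') (R : realType)
  (P : probability T R) (f : T -> T') (mf : measurable_fun setT f)
  (D : set T) (mD : measurable D) : set T' -> \bar R :=
  fun A => P (f @^-1` A `&` D).

Section lawr_measure.
Local Open Scope ereal_scope.
Context d d' (T : measurableType d) (T' : measurableType d') (R : realType).
Variables (P : probability T R) (f : T -> T') (mf : measurable_fun setT f)
  (D : set T) (mD : measurable D).

Let mpre A : measurable A -> measurable (f @^-1` A `&` D).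
Proof.
by move=> mA; apply: measurableI => //; rewrite -[X in measurable X]setTI; exact: mf.
Qed.

Let lawr0 : lawr P mf mD set0 = 0.
Proof. by rewrite /lawr preimage_set0 set0I measure0. Qed.

Let lawr_ge0 A : 0 <= lawr P mf mD A.
Proof. exact: measure_ge0. Qed.

Let lawr_sigma_additive : semi_sigma_additive (lawr P mf mD).
Proof.
move=> F mF tF mUF; rewrite /lawr preimage_bigcup setI_bigcupl.
apply: measure_semi_sigma_additive.
- by move=> n; exact: mpre.
- apply/trivIsetP => /= i j _ _ ij.
  rewrite setIACA -preimage_setI.
  by move/trivIsetP : tF => /(_ _ _ _ _ ij) ->//; rewrite preimage_set0 set0I.
- by rewrite -setI_bigcupl -preimage_bigcup; exact: mpre.
Qed.

HB.instance Definition _ := isMeasure.Build _ _ _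
  (lawr P mf mD) lawr0 lawr_ge0 lawr_sigma_additive.

Let lawr_fin : fin_num_fun (lawr P mf mD).
Proof. by move=> A mA; rewrite /lawr fin_num_measure//; exact: mpre. Qed.

HB.instance Definition _ := Measure_isFinite.Build _ _ _ (lawr P mf mD) lawr_fin.
End lawr_measure.


Lemma lawrT d d' (T : measurableType d) (T' : measurableType d') (R : realType)
  (P : probability T R) (f : T -> T') (mf : measurable_fun setT f) A :
  lawr P mf measurableT A = P (f @^-1` A).
Proof. by rewrite /lawr setIT. Qed.

Section Main.
Local Open Scope ereal_scope.
Context (d : measure_display) (T : measurableType d) (R : realType)
  (P : probability T R) (a b c : T -> R)
  (ma : measurable_fun setT a) (mb : measurable_fun setT b)
  (mc : measurable_fun setT c)
  (ua : uniform01 P a) (ub : uniform01 P b) (uc : uniform01 P c)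
  (iabc : indep3 P a b c).

Let Y := fun t => (a t, b t).
Let mY : measurable_fun setT Y. Proof. exact: measurable_fun_pair. Qed.
Let Yc := fun t => (Y t, c t).
Let mYc : measurable_fun setT Yc. Proof. exact: measurable_fun_pair. Qed.

Let La := lawr P ma measurableT.
Let Lb := lawr P mb measurableT.
Let Lc := lawr P mc measurableT.
Let LY := lawr P mY measurableT.

Let mpre d' (T' : measurableType d') (f : T -> T') (mf : measurable_fun setT f)
  (A : set T') : measurable A -> measurable (f @^-1` A).
Proof. by move=> mA; rewrite -[X in measurable X]setTI; exact: mf. Qed.

Let P1 (f : T -> R) : P (f @^-1` setT) = 1.
Proof. by rewrite preimage_setT probability_setT. Qed.

Lemma LYE S : measurable S -> P (Y @^-1` S) = (La \x Lb) S.
Proof.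
move=> mS; have := @product_measure_unique _ _ _ _ R La Lb LY.
move=> /(_ _ S mS) ->; first exact/esym/lawrT.
move=> A B mA mB.
transitivity (P (a @^-1` A `&` b @^-1` B)); first exact: lawrT.
have := iabc mA mB measurableT; rewrite preimage_setT setIT probability_setT mule1 => ->.
by rewrite -!lawrT.
Qed.

Lemma YcE S C : measurable S -> measurable C ->
  P (Y @^-1` S `&` c @^-1` C) = (La \x Lb) S * Lc C.
Proof.
move=> mS mC.
have mD := mpre mc mC.
pose Lr := lawr P mb mD.
have LrE B : measurable B -> Lr B = Lb B * Lc C.
  move=> mB; transitivity (P (b @^-1` B `&` c @^-1` C)); first by [].
  have := iabc measurableT mB mC; rewrite preimage_setT setTI probability_setT mul1e => ->.
  by rewrite -!lawrT.
have rect : forall A B, measurable A -> measurable B ->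
    lawr P mY mD (A `*` B) = La A * Lr B.
  move=> A B mA mB.
  transitivity (P (a @^-1` A `&` b @^-1` B `&` c @^-1` C)); first by [].
  rewrite iabc// -muleA; congr (_ * _); first by rewrite -lawrT.
  by rewrite -!lawrT; symmetry; exact: LrE.
have H := @product_measure_unique _ _ _ _ R La Lr (lawr P mY mD) rect S mS.
transitivity ((La \x Lr) S); first exact/esym/H.
rewrite /product_measure1.
rewrite -ge0_integralZr//; last exact: measurable_fun_xsection.
by apply: eq_integral => x _ /=; apply: LrE; exact: measurable_xsection.
Qed.

Lemma jointE S : measurable S -> P (Yc @^-1` S) = (LY \x Lc) S.
Proof.
move=> mS.
have rect : forall A C, measurable A -> measurable C ->
    lawr P mYc measurableT (A `*` C) = LY A * Lc C.
  move=> A C mA mC.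
  transitivity (P (Y @^-1` A `&` c @^-1` C)); first exact: lawrT.
  rewrite YcE// -LYE//.
  by rewrite -!lawrT.
have H := @product_measure_unique _ _ _ _ R LY Lc (lawr P mYc measurableT) rect S mS.
transitivity ((LY \x Lc) S); last by [].
transitivity (lawr P mYc measurableT S); first exact/esym/lawrT.
exact/esym/H.
Qed.

Lemma indep_comb (phi : R * R -> R) (mphi : measurable_fun setT phi) :
  indep2 P (fun t => mod1 (phi (Y t) + c t)) Y.
Proof.
set u := fun t => _.
have key A B : measurable A -> measurable B ->
    P (u @^-1` A `&` Y @^-1` B) =
    (@lebesgue_measure R) (A `&` `[0%R, 1%R]) * P (Y @^-1` B).
  move=> mA mB.
  pose h := fun p : (R * R) * R => mod1 (phi p.1 + p.2).
  have mh : measurable_fun setT h.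
    apply: measurableT_comp; first exact: measurable_mod1.
    apply: measurable_funD; last exact: measurable_snd.
    exact: measurableT_comp.
  pose S := (B `*` setT) `&` (h @^-1` A).
  have mS : measurable S.
    apply: measurableI; first exact: measurableX.
    by rewrite -[X in measurable X]setTI; exact: mh.
  transitivity (P (Yc @^-1` S)).
    by congr (P _); apply/seteqP; split => t /=; [case=> ? ?; split|case=> -[] ? ? ?; split].
  rewrite jointE // /product_measure1.
  transitivity (\int[LY]_x ((\1_B x)%:E * (@lebesgue_measure R) (A `&` `[0%R, 1%R]))).
    apply: eq_integral => x _ /=.
    transitivity (P (c @^-1` xsection S x)); first exact: lawrT.
    rewrite uc; last exact: measurable_xsection.
    rewrite indicE; have [xB|xB] := boolP (x \in B).
      rewrite mul1e -(circle (phi x) mA); congr (lebesgue_measure (_ `&` _)).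
      apply/seteqP; split => z /=; rewrite /xsection /= inE /S /h /=.
        by case.
      by move=> Az; split => //; split => //; rewrite -inE.
    rewrite mul0e; have -> : xsection S x = set0.
      apply/seteqP; split => z //=; rewrite /xsection /= inE /S /=.
      by move=> [[Bx _] _]; exact: (negP xB (mem_set Bx)).
    by rewrite set0I measure0.
  rewrite ge0_integralZr//; last first.
    by apply/measurable_EFinP; apply: measurable_indic.
  rewrite integral_indic// setIT muleC; congr (_ * _).
  exact: lawrT.
move=> A B mA mB.
rewrite key//.
have := key A setT mA measurableT.
rewrite preimage_setT setIT probability_setT mule1 => ->.
by [].
Qed.

End Main.


Unset Implicit Arguments.

Lemma mlin {R : realType} (k1 k2 : R) :
  measurable_fun setT (fun p : R * R => k1 * p.1 + k2 * p.2).
Proof.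
apply: measurable_funD.
  by apply: measurable_funM => //; exact: measurable_cst.
by apply: measurable_funM => //; exact: measurable_cst.
Qed.

Theorem mainTheorem5 (d : measure_display) (T : measurableType d) (R : realType)
  (P : probability T R) (a b c : T -> R)
  (ma : measurable_fun setT a) (mb : measurable_fun setT b)
  (mc : measurable_fun setT c)
  (ua : uniform01 P a) (ub : uniform01 P b) (uc : uniform01 P c)
  (iabc : indep3 P a b c) :
  let u := fun t => mod1 (a t + b t + c t) in
  let v := fun t => mod1 (a t / 2 + b t / 2 + c t) in
  let w := fun t => mod1 (4 * a t / 3 + 2 * b t / 3 + c t) in
  let z := fun t => mod1 (2 * a t / 3 + b t / 3 + c t) in
  let Y := fun t => (a t, b t) in
  let X := fun t => (u t, v t, w t, z t) in
  [/\ indep2 P u Y, indep2 P v Y, indep2 P w Y, indep2 P z Y &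
    exists g : R * R * R * R -> R * R,
      measurable_fun setT g /\ {ae P, forall t, Y t = g (X t)}].
Proof.
move=> u v w z Y X.
split.
- exact: (@indep_comb d T R P a b c ma mb mc uc iabc (fun p => p.1 + p.2)
    (measurable_funD measurable_fst measurable_snd)).
- apply: (@indep_comb d T R P a b c ma mb mc uc iabc (fun p => p.1 / 2 + p.2 / 2)).
  rewrite (_ : (fun p : R * R => _) = (fun p => 2^-1 * p.1 + 2^-1 * p.2)).
    exact: mlin.
  by apply/funext => p /=; ring.
- apply: (@indep_comb d T R P a b c ma mb mc uc iabc (fun p => 4 * p.1 / 3 + 2 * p.2 / 3)).
  rewrite (_ : (fun p : R * R => _) = (fun p => (4/3) * p.1 + (2/3) * p.2)).
    exact: mlin.
  by apply/funext => p /=; ring.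
- apply: (@indep_comb d T R P a b c ma mb mc uc iabc (fun p => 2 * p.1 / 3 + p.2 / 3)).
  rewrite (_ : (fun p : R * R => _) = (fun p => (2/3) * p.1 + (3^-1) * p.2)).
    exact: mlin.
  by apply/funext => p /=; ring.
pose p := fun x : R * R * R * R => mod1 (x.1.1.1 - x.1.1.2).
pose q := fun x : R * R * R * R => mod1 (x.1.2 - x.2).
have mp : measurable_fun setT p.
  apply: measurableT_comp; first exact: measurable_mod1.
  apply: measurable_funB.
    apply: measurableT_comp => //; apply: measurableT_comp => //.
  apply: measurableT_comp => //; apply: measurableT_comp => //.
have mq : measurable_fun setT q.
  apply: measurableT_comp; first exact: measurable_mod1.
  apply: measurable_funB => //.
  apply: measurableT_comp => //.
exists (fun x => (3 * q x - 2 * p x, 4 * p x - 3 * q x)); split.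
  apply: measurable_fun_pair; apply: measurable_funB;
    (apply: measurable_funM => //; exact: measurable_cst).
pose N := a @^-1` (~` `[0%R, 1%R[) `|` b @^-1` (~` `[0%R, 1%R[).
have nul (f : T -> R) : measurable_fun setT f -> uniform01 P f ->
    P.-negligible (f @^-1` (~` `[0%R, 1%R[)).
  move=> mf uf; have mI : measurable (~` `[0%R, 1%R[ : set R).
    exact: measurableC.
  apply/negligibleP.
    by rewrite -[X in measurable X]setTI; exact: mf.
  transitivity ((@lebesgue_measure R) ((~` `[0%R, 1%R[) `&` `[0%R, 1%R]));
    first exact: uf.
  by rewrite L_cc_co // setICl measure0.
have negN : P.-negligible N.
  apply: negligibleU; first exact: (nul a ma ua).
  exact: (nul b mb ub).
apply: negligibleS negN => t /= ne.
have [ha|ha] := boolP (0 <= a t < 1); last first.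
  by rewrite /N /=; left; rewrite in_itv /=; exact/negP.
have [hb|hb] := boolP (0 <= b t < 1); last first.
  by rewrite /N /=; right; rewrite in_itv /=; exact/negP.
exfalso; apply: ne.
move: ha hb => /andP[ha0 ha1] /andP[hb0 hb1].
have pE : p (X t) = a t / 2 + b t / 2.
  rewrite /p /X /= /u /v mod1B mod1_id; first lra.
  apply/andP; split; lra.
have qE : q (X t) = 2 * a t / 3 + b t / 3.
  rewrite /q /X /= /w /z mod1B mod1_id; first lra.
  apply/andP; split; lra.
rewrite pE qE /Y; congr pair; lra.
Qed.
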